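(* Let $k$ be a nonnegative integer and let $G$ be a finite simple graph such that every topological minor of $G$ has a vertex of degree at most $k$. Then $G$ is dynamically $(k+3)$-colorable.
   Context: All graphs are finite and simple. A graph $H$ is a topological minor of $G$ if $G$ has a subgraph isomorphic to a subdivision of $H$ (in particular $G$ is a topological minor of itself). Given a proper vertex coloring of a graph, a vertex $v$ is happy if either $v$ has at most one neighbor or $v$ has two neighbors receiving distinct colors. A dynamic $m$-coloring is a proper vertex coloring with at most $m$ colors in which every vertex is happy; a graph is dynamically $m$-colorable if it has one. *)

(* Defs.v *)
From mathcomp Require Import all_boot.
Set Implicit Arguments. Unset Strict Implicit. Unset Printing Implicit Defensive.

Definition simple_graph (T : finType) (e : rel T) : Prop :=
  symmetric e /\ irreflexive e.

Definition deg (T : finType) (e : rel T) (x : T) : nat := #|[set y | e x y]|.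

(* H = (V, eH) is a topological minor of G = (T, eG): G contains a subdivision
   of H, i.e. an injective map phi of the branch vertices, and for every edge
   uv of H a path in G from phi u to phi v whose interior vertices P u v are
   distinct, not branch vertices, and disjoint from the interiors of the paths
   of all other edges (P v u is the same path reversed). *)
Definition topological_minor (V T : finType) (eH : rel V) (eG : rel T) : Prop :=
  exists (phi : V -> T) (P : V -> V -> seq T),
    [/\ injective phi,
        forall u v, eH u v -> path eG (phi u) (rcons (P u v) (phi v)) && uniq (P u v),
        forall u v, eH u v -> P v u = rev (P u v),
        forall u v x, eH u v -> x \in P u v -> x \notin codom phi
      & forall u v u' v', eH u v -> eH u' v' ->
          ~~ (((u == u') && (v == v')) || ((u == v') && (v == u'))) ->
          [disjoint P u v & P u' v'] ].

Definition dynamic_coloring (T : finType) (e : rel T) (m : nat) (c : T -> 'I_m) : Prop :=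
  (forall x y, e x y -> c x != c y) /\
  (forall v, deg e v <= 1 \/ exists x y, [/\ e v x, e v y & c x != c y]).

Definition dynamically_colorable (T : finType) (e : rel T) (m : nat) : Prop :=
  exists c : T -> 'I_m, dynamic_coloring e c.

(* Main.v *)
Require Import Defs.
From mathcomp Require Import all_boot.
From mathcomp Require Import zify.
Set Implicit Arguments. Unset Strict Implicit. Unset Printing Implicit Defensive.

Lemma disjP (T : finType) (A B : {pred T}) :
  (forall z, z \in A -> z \in B -> False) -> [disjoint A & B].
Proof.
move=> H; rewrite disjoint_subset; apply/subsetP => z zA.
by rewrite inE /=; apply/negP => zB; apply: (H z).
Qed.

Record Inv (T : finType) (e : rel T) (S : {set T}) (e' : rel T)
  (Q : T -> T -> seq T) : Prop := MkInv {
  i_sy : symmetric e'; i_ir : irreflexive e';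
  i_S : forall x y, e' x y -> (x \in S) && (y \in S);
  i_pa : forall x y, e' x y -> path e x (rcons (Q x y) y) && uniq (Q x y);
  i_rv : forall x y, e' x y -> Q y x = rev (Q x y);
  i_nS : forall x y z, e' x y -> z \in Q x y -> z \notin S;
  i_dj : forall x y x' y', e' x y -> e' x' y' ->
      ~~ (((x == x') && (y == y')) || ((x == y') && (y == x'))) ->
      [disjoint Q x y & Q x' y'] }.

Lemma inv_low (k : nat) (T : finType) (e : rel T) S e' Q :
  (forall (V : finType) (eH : rel V), simple_graph eH -> 0 < #|V| ->
     topological_minor eH e -> exists x : V, deg eH x <= k) ->
  Inv e S e' Q -> 0 < #|S| -> exists2 v, v \in S & deg e' v <= k.
Proof.
move=> Hyp [sy ir inS pa rv nS dj] S0.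
pose V := {x : T | x \in S}.
pose eH : rel V := fun u w => e' (val u) (val w).
have [x Hx] : exists x : V, deg eH x <= k.
  apply: Hyp.
  - by split => [u w|u]; rewrite /eH; [apply: sy | apply: ir].
  - case/card_gt0P: S0 => s sS; apply/card_gt0P; by exists (exist _ s sS).
  - exists val, (fun u w => Q (val u) (val w)); split.
    + exact: val_inj.
    + by move=> u w; apply: pa.
    + by move=> u w; apply: rv.
    + move=> u w z uw zQ; apply/codomP => -[y zy].
      by move: (nS _ _ _ uw zQ); rewrite zy (valP y).
    + move=> u w u' w' uw uw' ne; apply: (dj _ _ _ _ uw uw').
      by move: ne; rewrite !val_eqE.
exists (val x); first exact: valP.
suff <- : deg eH x = deg e' (val x) by [].
rewrite /deg -(card_imset _ val_inj); apply: eq_card => y.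
rewrite inE; apply/imsetP/idP => [[w]|]; first by rewrite inE /eH => ? ->.
move=> xy; have yS : y \in S by case/andP: (inS _ _ xy).
by exists (exist _ y yS); rewrite // inE.
Qed.

Lemma extend (T : finType) (e' e1 : rel T) (v : T) m (c1 : T -> 'I_m) (col : 'I_m) :
 symmetric e' -> irreflexive e' ->
 (forall x y, e' x y -> x != v -> y != v -> e1 x y) ->
 (forall x y, e1 x y -> x != v) ->
 (forall x y, e1 x y -> ~~ e' x y -> e' v x) ->
 dynamic_coloring e1 c1 ->
 (deg e' v <= 1 \/ exists x y, [/\ e' v x, e' v y & c1 x != c1 y]) ->
 (forall u, e' v u -> col != c1 u) ->
 (forall u w, e' v u -> e' u w -> w != v ->
    (forall w', e' u w' -> w' != v -> c1 w' = c1 w) -> col != c1 w) ->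
 dynamic_coloring e' (fun x => if x == v then col else c1 x).
Proof.
move=> sy ir sub1 nv1 new1 [pr1 hap1] hv Hcol Hmono.
have nbv : forall y, e' v y -> (y == v) = false.
  by move=> y vy; apply/negbTE/eqP => yv; move: vy; rewrite yv ir.
split.
- move=> x y xy.
  case: (eqVneq x v) => [xv|xv].
    subst x; rewrite (nbv _ xy); exact: Hcol.
  case: (eqVneq y v) => [yv|yv].
    subst y; rewrite eq_sym; apply: Hcol; by rewrite sy.
  exact: pr1 (sub1 _ _ xy xv yv).
- move=> x.
  case: (eqVneq x v) => [xv|xv].
    subst x; case: hv => [->|[a [b [va vb ab]]]]; first by left.
    by right; exists a, b; rewrite (nbv _ va) (nbv _ vb).
  case: (boolP (e' v x)) => vx.
    case: (boolP [exists w, exists w', [&& e' x w, e' x w', w != v, w' != v & c1 w != c1 w']]).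
      case/existsP => w /existsP [w' /and5P [xw xw' wv w'v ne]].
      by right; exists w, w'; rewrite (negbTE wv) (negbTE w'v).
    move=> nex.
    case: (boolP [exists w, e' x w && (w != v)]).
      case/existsP => w /andP [xw wv].
      right; exists v, w; rewrite eqxx (negbTE wv); split => //; first by rewrite sy.
      apply: (Hmono x) => // w' xw' w'v; apply/eqP; apply: contraNT nex => ne.
      by apply/existsP; exists w'; apply/existsP; exists w; rewrite xw' xw w'v wv ne.
    move=> nw; left; rewrite /deg -(cards1 v); apply: subset_leq_card.
    apply/subsetP => y; rewrite !inE => xy; apply: contraNT nw => yv.
    by apply/existsP; exists y; rewrite xy yv.
  have eq1 : forall y, e1 x y = e' x y.
    move=> y; apply/idP/idP => [h|h].
      by apply: contraNT vx => nxy; apply: new1 h nxy.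
    apply: sub1 => //; apply/negP => /eqP yv; subst y; by rewrite sy h in vx.
  have yv : forall y, e' x y -> (y == v) = false.
    by move=> y xy; apply/negbTE/negP => /eqP yv; subst y; rewrite sy xy in vx.
  case: (hap1 x) => [h|[a [b [xa xb ab]]]].
    left; move: h; rewrite /deg.
    have -> : [set y | e1 x y] = [set y | e' x y] by apply/setP => y; rewrite !inE eq1.
    by [].
  right; exists a, b; rewrite -!eq1 xa xb (yv a) ?(yv b) // -?eq1 //.
Qed.

Lemma newW (T : finType) (e : rel T) S e' Q v p q : Inv e S e' Q -> v \in S ->
  e' v p -> e' v q -> p != q ->
 [/\ path e p (rcons (Q p v ++ v :: Q v q) q), uniq (Q p v ++ v :: Q v q),
     (forall z, z \in Q p v ++ v :: Q v q -> z \notin S :\ v)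
   & (forall x y, e' x y -> x != v -> y != v -> [disjoint Q x y & Q p v ++ v :: Q v q])].
Proof.
move=> [sy ir inS pa rv nS dj] vS vp vq pq.
have pv : e' p v by rewrite sy.
have vnp : (v == p) = false by apply/negbTE/negP => /eqP h; move: vp; rewrite -h ir.
have vnq : (v == q) = false by apply/negbTE/negP => /eqP h; move: vq; rewrite -h ir.
have vQ : forall x y, e' x y -> v \notin Q x y.
  by move=> x y xy; apply/negP => /(nS _ _ _ xy); rewrite vS.
split.
- rewrite -cat_rcons rcons_cat cat_path last_rcons.
  by apply/andP; split; [case/andP: (pa _ _ pv) | case/andP: (pa _ _ vq)].
- rewrite cat_uniq /= (vQ _ _ vq).
  case/andP: (pa _ _ pv) => _ ->; case/andP: (pa _ _ vq) => _ -> /=.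
  rewrite andbT negb_or (vQ _ _ pv) /=.
  have := dj _ _ _ _ pv vq; rewrite vnq eq_sym vnp eqxx andbT (negbTE pq) /= => /(_ isT).
  by rewrite disjoint_sym disjoint_has.
- move=> z; rewrite mem_cat in_cons !inE => /or3P [h|/eqP->|h].
  + by rewrite (negbTE (nS _ _ _ pv h)) andbF.
  + by rewrite eqxx.
  + by rewrite (negbTE (nS _ _ _ vq h)) andbF.
- move=> x y xy xv yv.
  rewrite disjoint_sym disjoint_cat disjoint_cons (vQ _ _ xy) /=.
  rewrite (dj _ _ _ _ pv xy) ?(dj _ _ _ _ vq xy) //;
    by rewrite !(eq_sym v) (negbTE xv) (negbTE yv) /= ?andbF ?andFb.
Qed.

Definition newE (T : finType) (e' : rel T) (v a b : T) (nb : bool) : rel T :=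
  fun x y => [&& e' x y, x != v & y != v] ||
             (nb && (((x == a) && (y == b)) || ((x == b) && (y == a)))).
Definition newQ (T : finType) (Q : T -> T -> seq T) (v a b : T) (nb : bool) :
  T -> T -> seq T :=
  fun x y => if nb && ((x == a) && (y == b)) then Q a v ++ v :: Q v b
             else if nb && ((x == b) && (y == a)) then Q b v ++ v :: Q v a else Q x y.

Lemma inv_step (T : finType) (e : rel T) (S : {set T}) (e' : rel T) Q (v a b : T) (nb : bool) :
  Inv e S e' Q -> v \in S ->
  (nb -> [&& e' v a, e' v b, a != b & ~~ e' a b]) ->
  Inv e (S :\ v) (newE e' v a b nb) (newQ Q v a b nb).
Proof.
move=> I vS; have [sy ir inS pa rv nS dj] := I.
case: nb => Hnb; last first.
  rewrite /newE /newQ /=; split.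
  - by move=> x y; rewrite orbF (sy x y); case: (e' y x); case: (x != v); case: (y != v).
  - by move=> x; rewrite ir.
  - move=> x y; rewrite orbF => /and3P [xy xv yv]; case/andP: (inS _ _ xy) => xS yS.
    by rewrite !inE xv yv xS yS.
  - by move=> x y; rewrite orbF => /and3P [xy _ _]; apply: pa.
  - by move=> x y; rewrite orbF => /and3P [xy _ _]; apply: rv.
  - move=> x y z; rewrite orbF => /and3P [xy _ _] zQ; rewrite !inE negb_and.
    by rewrite (nS _ _ _ xy zQ) orbT.
  - move=> x y x' y'; rewrite !orbF => /and3P [xy _ _] /and3P [xy' _ _]; exact: dj.
case/and4P: (Hnb isT) => va vb ab nab.
have ba : (b == a) = false by rewrite eq_sym; apply/negbTE.
have nba : e' b a = false by rewrite sy; apply/negbTE.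
have av : (a == v) = false by apply/negbTE/negP => /eqP h; move: va; rewrite h ir.
have bv : (b == v) = false by apply/negbTE/negP => /eqP h; move: vb; rewrite h ir.
have aS : a \in S by case/andP: (inS _ _ va).
have bS : b \in S by case/andP: (inS _ _ vb).
have Qold : forall x y, e' x y -> newQ Q v a b true x y = Q x y.
  move=> x y xy; rewrite /newQ /=.
  case: (eqVneq x a) => [xa|xa]; case: (eqVneq y b) => [yb|yb] //=;
    try by (subst; rewrite xy in nab).
  - by subst; rewrite (negbTE ab).
  - case: (eqVneq x b) => [xb|xb]; case: (eqVneq y a) => [ya|ya] //=.
    by subst; rewrite xy in nba.
  - case: (eqVneq x b) => [xb|xb]; case: (eqVneq y a) => [ya|ya] //=.
    by subst; rewrite xy in nba.
have Qab : newQ Q v a b true a b = Q a v ++ v :: Q v b by rewrite /newQ !eqxx.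
have Qba : newQ Q v a b true b a = Q b v ++ v :: Q v a by rewrite /newQ ba /= !eqxx.
have [Wp1 Wu1 WS1 Wd1] := newW I vS va vb ab.
have [Wp2 Wu2 WS2 Wd2] := newW I vS vb va (negbT ba).
have cls : forall x y, newE e' v a b true x y ->
   [|| [&& e' x y, x != v & y != v], ((x == a) && (y == b)) | ((x == b) && (y == a))].
  by move=> x y; rewrite /newE /=.
split.
- move=> x y; rewrite /newE /= (sy x y).
  by case: (e' y x); case: (x != v); case: (y != v); case: (x == a); case: (y == b);
     case: (x == b); case: (y == a).
- move=> x; rewrite /newE /= ir /=; case: (eqVneq x a) => [->|]; first by rewrite (negbTE ab) andbF.
  by move=> /negbTE xa; rewrite ?xa ?andbF.
- move=> x y /cls /or3P [/and3P [xy xv yv]| /andP [/eqP-> /eqP->] | /andP [/eqP-> /eqP->]].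
  + by case/andP: (inS _ _ xy) => xS yS; rewrite !inE xv yv xS yS.
  + by rewrite !inE av bv aS bS.
  + by rewrite !inE av bv aS bS.
- move=> x y /cls /or3P [/and3P [xy xv yv]| /andP [/eqP-> /eqP->] | /andP [/eqP-> /eqP->]].
  + by rewrite Qold //; apply: pa.
  + by rewrite Qab Wp1 Wu1.
  + by rewrite Qba Wp2 Wu2.
- move=> x y /cls /or3P [/and3P [xy xv yv]| /andP [/eqP-> /eqP->] | /andP [/eqP-> /eqP->]].
  + by rewrite (Qold _ _ xy) Qold ?(rv _ _ xy) // sy.
  + rewrite Qab Qba rev_cat rev_cons -cats1 -catA /= -(rv _ _ vb) (rv v a) ?revK //.
  + rewrite Qab Qba rev_cat rev_cons -cats1 -catA /= -(rv _ _ va) (rv v b) ?revK //.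
- move=> x y z /cls /or3P [/and3P [xy xv yv]| /andP [/eqP-> /eqP->] | /andP [/eqP-> /eqP->]].
  + rewrite Qold // => zQ; rewrite !inE negb_and (nS _ _ _ xy zQ) orbT //.
  + by rewrite Qab => /WS1.
  + by rewrite Qba => /WS2.
- move=> x y x' y' /cls /or3P [/and3P [xy xv yv]| /andP [/eqP-> /eqP->] | /andP [/eqP-> /eqP->]];
  move=> /cls /or3P [/and3P [xy' xv' yv']| /andP [/eqP-> /eqP->] | /andP [/eqP-> /eqP->]].
  + by rewrite (Qold _ _ xy) (Qold _ _ xy'); apply: dj.
  + by rewrite (Qold _ _ xy) Qab => _; apply: Wd1.
  + by rewrite (Qold _ _ xy) Qba => _; apply: Wd2.
  + by rewrite (Qold _ _ xy') Qab => _; rewrite disjoint_sym; apply: Wd1.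
  + by rewrite !eqxx.
  + by rewrite !eqxx orbT.
  + by rewrite (Qold _ _ xy') Qba => _; rewrite disjoint_sym; apply: Wd2.
  + by rewrite !eqxx orbT.
  + by rewrite !eqxx.
Qed.

Lemma edgeless_col (T : finType) (e' : rel T) m : 0 < m ->
  (forall x y, ~~ e' x y) -> dynamically_colorable e' m.
Proof.
move=> m0 ne; exists (fun _ => Ordinal m0); split.
  by move=> x y xy; move: (ne x y); rewrite xy.
move=> v; left; rewrite /deg.
have -> : [set y | e' v y] = set0 by apply/setP => y; rewrite !inE (negbTE (ne v y)).
by rewrite cards0.
Qed.

Lemma fresh m (F : {set 'I_m}) : #|F| < m -> exists col, col \notin F.
Proof.
move=> h; have hc := cardsC F; rewrite card_ord in hc; have : 0 < #|~: F| by lia.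
by case/card_gt0P => x; rewrite inE => ?; exists x.
Qed.

Lemma main (k : nat) (T : finType) (e : rel T) :
  (forall (V : finType) (eH : rel V), simple_graph eH -> 0 < #|V| ->
     topological_minor eH e -> exists x : V, deg eH x <= k) ->
  forall n (S : {set T}) e' Q, #|S| <= n -> Inv e S e' Q ->
  dynamically_colorable e' (k + 3).
Proof.
move=> Hyp; elim=> [|n IH] S e' Q Sn I.
  apply: edgeless_col; first by lia.
  move=> x y; apply/negP => xy; case/andP: (i_S I xy) => xS _.
  by move: Sn; rewrite leqn0 => /eqP/cards0_eq S0; rewrite S0 inE in xS.
case: (posnP #|S|) => [S0|Spos].
  apply: edgeless_col; first by lia.
  move=> x y; apply/negP => xy; case/andP: (i_S I xy) => xS _.
  by move/cards0_eq: S0 => S0; rewrite S0 inE in xS.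
have [v0 v0S v0k] := inv_low Hyp I Spos.
have [v [vS Hv]] : exists v, v \in S /\ (deg e' v <= 1 \/ (deg e' v <= 2 /\ 2 <= k) \/
     (deg e' v <= k /\ forall u, e' v u -> 2 < deg e' u)).
  case: (leqP (deg e' v0) 1) => h0; first by exists v0; split => //; left.
  case: (boolP [exists u in S, deg e' u <= 2]).
    case/existsP => u /andP [uS u2]; exists u; split => //; right; left; split => //.
    by apply: leq_trans v0k.
  move=> nex; exists v0; split => //; right; right; split => // u vu.
  rewrite ltnNge; apply: contra nex => u2; apply/existsP; exists u.
  by case/andP: (i_S I vu) => _ ->.
have sy := i_sy I; have ir := i_ir I.
set nb := [exists a, exists b, [&& e' v a, e' v b, a != b & ~~ e' a b]].
have [a [b Hab]] : exists a b, nb -> [&& e' v a, e' v b, a != b & ~~ e' a b].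
  case: (boolP nb) => [/existsP [a /existsP [b h]]|_]; first by exists a, b.
  by exists v, v.
have I1 := inv_step I vS Hab.
have Sn1 : #|S :\ v| <= n by move: Sn; rewrite (cardsD1 v S) vS.
have [c1 Hc1] := IH _ _ _ Sn1 I1.
pose mono u := [forall w, forall w', (e' u w && (w != v) && e' u w' && (w' != v)) ==> (c1 w == c1 w')].
pose M := [set u | [&& e' v u, mono u & [exists w, e' u w && (w != v)]]].
pose fcol u := c1 (odflt v [pick w | e' u w && (w != v)]).
pose F := c1 @: [set u | e' v u] :|: fcol @: M.
have MN : #|M| <= deg e' v.
  by apply: subset_leq_card; apply/subsetP => u; rewrite !inE => /andP [].
have FB : #|F| <= deg e' v + #|M|.
  rewrite cardsU; apply: leq_trans (leq_subr _ _) _.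
  by apply: leq_add; apply: leq_imset_card.
have nvS : forall y, e' v y -> (y == v) = false.
  by move=> y vy; apply/negbTE/negP => /eqP h; move: vy; rewrite h ir.
have M2 : (forall u, e' v u -> 2 < deg e' u) -> #|M| <= 2.
  move=> h3; apply: (@leq_trans #|[set a; b]|); last by rewrite cards2; case: (a != b).
  apply: subset_leq_card; apply/subsetP => u; rewrite inE => /and3P [vu mu _].
  rewrite !inE; apply: contraTT mu; rewrite negb_or => /andP [ua ub].
  have e1u : forall y, newE e' v a b nb u y = e' u y && (y != v).
    by move=> y; rewrite /newE (nvS _ vu) (negbTE ua) (negbTE ub) /= andbF orbF.
  have d1 : deg (newE e' v a b nb) u = #|[set y | e' u y] :\ v|.
    rewrite /deg; have -> : [set y | newE e' v a b nb u y] = [set y | e' u y] :\ v.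
      by apply/setP => y; rewrite !inE e1u andbC.
    by [].
  have d2 : 1 < deg (newE e' v a b nb) u.
    have := h3 _ vu; rewrite d1 /deg (cardsD1 v [set y | e' u y]) inE -sy vu; lia.
  case: (proj2 Hc1 u) => [hd|[x [y [ux uy cxy]]]]; first by move: hd; rewrite leqNgt d2.
  move: ux uy; rewrite !e1u => /andP [ux xv] /andP [uy yv].
  apply/negP => /forallP /(_ x) /forallP /(_ y); rewrite ux xv uy yv /=.
  by rewrite (negbTE cxy).
have Fk : #|F| < k + 3.
  case: Hv => [h|[[h1 h2]|[h1 h2]]]; first by lia.
    by lia.
  by have := M2 h2; lia.
have [col colF] := fresh Fk.
exists (fun x => if x == v then col else c1 x).
apply: (extend sy ir _ _ _ Hc1).
- by move=> x y xy xv yv; rewrite /newE xy xv yv.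
- by move=> x y /(i_S I1) /andP [h _]; move: h; rewrite !inE => /andP [h _].
- move=> x y; rewrite /newE => /orP [/and3P [xy _ _]|]; first by rewrite xy.
  move=> /andP [hnb h] _; case/and4P: (Hab hnb) => va vb _ _.
  by case/orP: h => /andP [/eqP -> _].
- case: (boolP nb) => hnb.
    right; exists a, b; case/and4P: (Hab hnb) => va vb _ _; split => //.
    by apply: (proj1 Hc1); rewrite /newE hnb !eqxx orbT.
  case: (leqP (deg e' v) 1) => h; first by left.
  right; have : 0 < deg e' v by lia.
  case/card_gt0P => x; rewrite inE => vx.
  have : 0 < #|[set y | e' v y] :\ x|.
    by move: h; rewrite /deg (cardsD1 x) inE vx; lia.
  case/card_gt0P => y; rewrite !inE => /andP [yx vy].
  exists x, y; split => //; apply: (proj1 Hc1); rewrite /newE (nvS _ vx) (nvS _ vy) /=.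
  rewrite andbT; apply/orP; left; apply: contraNT hnb => nxy; apply/existsP; exists x; apply/existsP; exists y.
  by rewrite vx vy eq_sym yx nxy.
- move=> u vu; apply: contraNneq colF => ->; rewrite inE; apply/orP; left.
  by apply: imset_f; rewrite inE.
- move=> u w vu uw wv Hm; apply: contraNneq colF => ->; rewrite inE; apply/orP; right.
  have uM : u \in M.
    rewrite inE vu /=; apply/andP; split.
      apply/forallP => w1; apply/forallP => w2; apply/implyP => /andP [/andP [/andP [u1 v1] u2] v2].
      by rewrite (Hm w1) ?(Hm w2).
    by apply/existsP; exists w; rewrite uw wv.
  have fc : fcol u = c1 w.
    rewrite /fcol; case: pickP => [w0 /andP [uw0 w0v]|/(_ w)]; first by rewrite /= Hm.
    by rewrite uw wv.
  by rewrite -fc; apply: imset_f.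
Qed.
Theorem lemma6p2 (k : nat) (T : finType) (e : rel T) :
  simple_graph e ->
  (forall (V : finType) (eH : rel V), simple_graph eH -> 0 < #|V| ->
     topological_minor eH e -> exists x : V, deg eH x <= k) ->
  dynamically_colorable e (k + 3).
Proof.
move=> [sy ir] Hyp.
apply: (@main k T e Hyp #|[set: T]| [set: T] e (fun _ _ => [::])) => //.
split => //.
- by move=> x y _; rewrite !inE.
- by move=> x y xy; rewrite /= xy.
- by move=> x y x' y' _ _ _; rewrite disjoint_has.
Qed.
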